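(* Let $(A,\mu,\alpha,\beta)$ be a BiHom-Novikov algebra and let $\tilde\alpha,\tilde\beta:A\to A$ be two morphisms of BiHom-Novikov algebras (from $A$ to itself) such that any two of the maps $\alpha,\beta,\tilde\alpha,\tilde\beta$ commute. Then $(A,\mu\circ(\tilde\alpha\otimes\tilde\beta),\alpha\circ\tilde\alpha,\beta\circ\tilde\beta)$ is also a BiHom-Novikov algebra.
   Context: Work over a field. A BiHom-Novikov algebra is a 4-tuple $(A,\mu,\alpha,\beta)$ with $\mu:A\otimes A\to A$ (written $x\cdot y$) and commuting linear maps $\alpha,\beta:A\to A$ such that for all $x,y,z\in A$: $\alpha(x\cdot y)=\alpha(x)\cdot\alpha(y)$, $\beta(x\cdot y)=\beta(x)\cdot\beta(y)$, $(\beta(x)\cdot\alpha(y))\cdot\beta(z)-\alpha\beta(x)\cdot(\alpha(y)\cdot z)=(\beta(y)\cdot\alpha(x))\cdot\beta(z)-\alpha\beta(y)\cdot(\alpha(x)\cdot z)$, and $(x\cdot\beta(y))\cdot\alpha\beta(z)=(x\cdot\beta(z))\cdot\alpha\beta(y)$. A morphism $f:(A,\mu_A,\alpha_A,\beta_A)\to(B,\mu_B,\alpha_B,\beta_B)$ of BiHom-Novikov algebras is a linear map with $\alpha_B f=f\alpha_A$, $\beta_B f=f\beta_A$ and $f\circ\mu_A=\mu_B\circ(f\otimes f)$. *)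

(* Defs.v *)
From mathcomp Require Import all_boot all_order all_algebra.
Set Implicit Arguments. Unset Strict Implicit. Unset Printing Implicit Defensive.
Import GRing.Theory.
Local Open Scope ring_scope.

Definition bilinear_mul (F : fieldType) (A : lmodType F) (mu : A -> A -> A) : Prop :=
  (forall x, linear (mu x)) /\ (forall y, linear (fun x => mu x y)).

Definition is_BiHomNovikov (F : fieldType) (A : lmodType F)
  (mu : A -> A -> A) (alpha beta : {linear A -> A}) : Prop :=
  bilinear_mul mu /\
  (forall x, alpha (beta x) = beta (alpha x)) /\
  (forall x y, alpha (mu x y) = mu (alpha x) (alpha y)) /\
  (forall x y, beta (mu x y) = mu (beta x) (beta y)) /\
  (forall x y z,
     mu (mu (beta x) (alpha y)) (beta z) - mu (alpha (beta x)) (mu (alpha y) z)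
   = mu (mu (beta y) (alpha x)) (beta z) - mu (alpha (beta y)) (mu (alpha x) z)) /\
  (forall x y z,
     mu (mu x (beta y)) (alpha (beta z)) = mu (mu x (beta z)) (alpha (beta y))).

Definition is_BiHomNovikov_morphism (F : fieldType) (A B : lmodType F)
  (muA : A -> A -> A) (alphaA betaA : A -> A)
  (muB : B -> B -> B) (alphaB betaB : B -> B) (f : {linear A -> B}) : Prop :=
  (forall x, alphaB (f x) = f (alphaA x)) /\
  (forall x, betaB (f x) = f (betaA x)) /\
  (forall x y, f (muA x y) = muB (f x) (f y)).

Definition lin_comp (F : fieldType) (A : lmodType F) (f g : {linear A -> A})
  : {linear A -> A} := (f \o g)%FUN.

(* Main.v *)
Require Import Defs.
From mathcomp Require Import all_boot all_order all_algebra.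
Import GRing.Theory.
Local Open Scope ring_scope.

Theorem proposition2p3 (F : fieldType) (A : lmodType F) (mu : A -> A -> A)
  (alpha beta alpha' beta' : {linear A -> A}) :
  is_BiHomNovikov mu alpha beta ->
  is_BiHomNovikov_morphism mu alpha beta mu alpha beta alpha' ->
  is_BiHomNovikov_morphism mu alpha beta mu alpha beta beta' ->
  (forall x, alpha (beta x) = beta (alpha x)) ->
  (forall x, alpha (alpha' x) = alpha' (alpha x)) ->
  (forall x, alpha (beta' x) = beta' (alpha x)) ->
  (forall x, beta (alpha' x) = alpha' (beta x)) ->
  (forall x, beta (beta' x) = beta' (beta x)) ->
  (forall x, alpha' (beta' x) = beta' (alpha' x)) ->
  is_BiHomNovikov (fun x y => mu (alpha' x) (beta' y))
    (lin_comp alpha alpha') (lin_comp beta beta').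
Proof.
move=> [[L1 L2] [_ [Ma [Mb [N1 N2]]]]] [_ [_ Ma']] [_ [_ Mb']] H1 H2 H3 H4 H5 H6.
rewrite /lin_comp.
split; [split|split; [|split; [|split; [|split]]]] => /=.
- move=> x c u v /=; rewrite linearP; exact: L1.
- move=> y c u v /=; rewrite linearP; exact: (L2 (beta' y)).
- move=> x; rewrite -?(H1, H2, H3, H4, H5, H6); done.
- move=> x y; rewrite ?(Ma, Mb, Ma', Mb'); rewrite -?(H1, H2, H3, H4, H5, H6); done.
- move=> x y; rewrite ?(Ma, Mb, Ma', Mb'); rewrite -?(H1, H2, H3, H4, H5, H6); done.
- move=> x y z; have := N1 (alpha' (alpha' (beta' x))) (alpha' (alpha' (beta' y))) (beta' (beta' z)).
  rewrite ?(Ma, Mb, Ma', Mb'); rewrite -?(H1, H2, H3, H4, H5, H6) => E.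
  rewrite ?(Ma, Mb, Ma', Mb'); rewrite -?(H1, H2, H3, H4, H5, H6); exact E.
- move=> x y z; have := N2 (alpha' (alpha' x)) (alpha' (beta' (beta' y))) (alpha' (beta' (beta' z))).
  rewrite ?(Ma, Mb, Ma', Mb'); rewrite -?(H1, H2, H3, H4, H5, H6) => E.
  rewrite ?(Ma, Mb, Ma', Mb'); rewrite -?(H1, H2, H3, H4, H5, H6); exact E.
Qed.
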